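(* Let $X$ be a noncommutative space embedded in $\mathcal A^m$, $e=\tilde E^j\ast E_j$, with canonical connections $\nabla_i\zeta=\partial_i\zeta-\zeta\ast\partial_ie$ on $TX=\mathcal A^m\ast e$ and $\tilde\nabla_i\xi=\partial_i\xi-\partial_i(e)\ast\xi$ on $\tilde TX=e\ast{}^m\!\mathcal A$, and curvature $\mathcal R_{ij}=-(\partial_ie\ast\partial_je-\partial_je\ast\partial_ie)$. Define $R^l_{kij}=E_k\ast\mathcal R_{ij}\ast\tilde E^l$ and $\tilde R^l_{kij}=-g^{lq}\ast E_q\ast\mathcal R_{ij}\ast\tilde E^p\ast g_{pk}$. Then $$R^l_{kij}=-\partial_j\Gamma^l_{ik}-\Gamma^p_{ik}\ast\Gamma^l_{jp}+\partial_i\Gamma^l_{jk}+\Gamma^p_{jk}\ast\Gamma^l_{ip},$$ $$\tilde R^l_{kij}=-\partial_j\tilde\Gamma^l_{ik}-\tilde\Gamma^l_{jp}\ast\tilde\Gamma^p_{ik}+\partial_i\tilde\Gamma^l_{jk}+\tilde\Gamma^l_{ip}\ast\tilde\Gamma^p_{jk},$$ and $[\nabla_i,\nabla_j]E_k=R^l_{kij}\ast E_l$, $[\tilde\nabla_i,\tilde\nabla_j](E_k)^t=(E_l)^t\ast\tilde R^l_{kij}$.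
   Context: $\mathcal A$ denotes the Moyal algebra: for $U\subset\mathbb R^n$ open with coordinates $t$ and $\hbar$ a formal real indeterminate, $\mathcal A$ is the set of formal power series $\sum_{i\ge0}f_i\hbar^i$ with real smooth coefficients on $U$, with product $(f\ast g)(t)=\lim_{t'\to t}\exp\big(\hbar\sum_{i,j}\theta_{ij}\frac{\partial}{\partial t^i}\frac{\partial}{\partial t'^j}\big)f(t)g(t')$ for a fixed constant real skew-symmetric $\theta$ ($\partial_i=\partial/\partial t^i$ are commuting derivations, acting entrywise on matrices). Matrices over $\mathcal A$ are multiplied using $\ast$; $\mathcal A^m$ row vectors, ${}^m\!\mathcal A$ column vectors. Einstein summation. For $X=(X^1,\dots,X^m)\in\mathcal A^m$, $g_{ij}=\sum_\alpha\partial_iX^\alpha\ast\partial_jX^\alpha$; $X$ is a noncommutative space embedded in $\mathcal A^m$ if $(g_{ij})$ is invertible, inverse $(g^{ij})$. $E_i=\partial_iX$, $(E_i)^t$ its transpose, $\tilde E^i=(E_j)^t\ast g^{ji}$. ${}_c\Gamma_{ijl}=\tfrac12(\partial_ig_{jl}+\partial_jg_{li}-\partial_lg_{ji})$, $\Upsilon_{ijl}=\tfrac12(\partial_i(E_j)\ast(E_l)^t-E_l\ast\partial_i(E_j)^t)$, $\Gamma_{ijl}={}_c\Gamma_{ijl}+\Upsilon_{ijl}$, $\tilde\Gamma_{ijl}={}_c\Gamma_{ijl}-\Upsilon_{ijl}$, $\Gamma_{ij}^k=\Gamma_{ijl}\ast g^{lk}$, $\tilde\Gamma_{ij}^k=g^{kl}\ast\tilde\Gamma_{ijl}$.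 *)

(* Defs.v *)
From HB Require Import structures.
From mathcomp Require Import all_boot all_order all_algebra.
Set Implicit Arguments. Unset Strict Implicit. Unset Printing Implicit Defensive.
Import Order.TTheory GRing.Theory Num.Theory.
Local Open Scope ring_scope.

Section NCGeom.
Variables (A : unitRingType) (n m : nat).
(* d i = the commuting derivation \partial_i of the algebra A *)
Variable d : 'I_n -> A -> A.
Variable X : 'rV[A]_m.
(* ginv = (g^{ij}), the inverse of the metric g *)
Variable ginv : 'M[A]_n.

Definition dmx (i : 'I_n) p q (M : 'M[A]_(p, q)) : 'M[A]_(p, q) := map_mx (d i) M.

Definition lsc p (a : A) (v : 'rV[A]_p) : 'rV[A]_p := \row_k (a * v 0 k).
Definition rsc p (v : 'cV[A]_p) (a : A) : 'cV[A]_p := \col_k (v k 0 * a).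

Definition Evec (i : 'I_n) : 'rV[A]_m := dmx i X.
Definition gmet : 'M[A]_n := \matrix_(i, j) ((Evec i *m (Evec j)^T) 0 0).
Definition Etil (i : 'I_n) : 'cV[A]_m := \sum_j rsc (Evec j)^T (ginv j i).
Definition eproj : 'M[A]_m := \sum_j (Etil j *m Evec j).

Definition nabla (i : 'I_n) (z : 'rV[A]_m) : 'rV[A]_m := dmx i z - z *m dmx i eproj.
Definition nablat (i : 'I_n) (x : 'cV[A]_m) : 'cV[A]_m := dmx i x - dmx i eproj *m x.

Definition Rcurv (i j : 'I_n) : 'M[A]_m :=
  - (dmx i eproj *m dmx j eproj - dmx j eproj *m dmx i eproj).

Definition Rcomp (l k i j : 'I_n) : A := (Evec k *m Rcurv i j *m Etil l) 0 0.
Definition Rtcomp (l k i j : 'I_n) : A :=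
  - \sum_q \sum_p (ginv l q * (Evec q *m Rcurv i j *m Etil p) 0 0 * gmet p k).

Definition half : A := (2%:R : A)^-1.
Definition cGam (i j l : 'I_n) : A :=
  half * (d i (gmet j l) + d j (gmet l i) - d l (gmet j i)).
Definition Ups (i j l : 'I_n) : A :=
  half * ((dmx i (Evec j) *m (Evec l)^T) 0 0 - (Evec l *m (dmx i (Evec j))^T) 0 0).
Definition Gam3 (i j l : 'I_n) : A := cGam i j l + Ups i j l.
Definition Gamt3 (i j l : 'I_n) : A := cGam i j l - Ups i j l.
(* Gam i j k = \Gamma_{ij}^k ;  Gamt i j k = \tilde\Gamma_{ij}^k *)
Definition Gam (i j k : 'I_n) : A := \sum_l Gam3 i j l * ginv l k.
Definition Gamt (i j k : 'I_n) : A := \sum_l ginv k l * Gamt3 i j l.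

End NCGeom.

(* Main.v *)
Require Import Defs.
From HB Require Import structures.
From mathcomp Require Import all_boot all_order all_algebra.
Import GRing.Theory.
Local Open Scope ring_scope.
Set Implicit Arguments. Unset Strict Implicit.

Lemma der0 (A : unitRingType) (f : A -> A) (fadd : forall x y, f (x + y) = f x + f y) : f 0 = 0.
Proof. have H := fadd 0 0; rewrite addr0 in H. by apply: (addrI (f 0)); rewrite addr0 -H. Qed.

Lemma der_sum (A : unitRingType) (f : A -> A) (fadd : forall x y, f (x + y) = f x + f y)
  (I : Type) (r : seq I) (P : pred I) (F : I -> A) :
  f (\sum_(k <- r | P k) F k) = \sum_(k <- r | P k) f (F k).
Proof. by rewrite (big_morph f fadd (@der0 A f fadd)). Qed.

Lemma derN (A : unitRingType) (f : A -> A) (fadd : forall x y, f (x + y) = f x + f y) x : f (- x) = - f x.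
Proof. by apply/eqP; rewrite -(subr_eq0) opprK -fadd addNr der0. Qed.

Lemma derB (A : unitRingType) (f : A -> A) (fadd : forall x y, f (x + y) = f x + f y) x y : f (x - y) = f x - f y.
Proof. by rewrite fadd derN. Qed.

Lemma der1 (A : unitRingType) (f : A -> A) (fadd : forall x y, f (x + y) = f x + f y)
  (fmul : forall x y, f (x * y) = f x * y + x * f y) : f 1 = 0.
Proof. have H := fmul 1 1; rewrite !mulr1 mul1r in H. by apply: (addrI (f 1)); rewrite addr0 -H. Qed.

Section Dm.
Variables (A : unitRingType) (f : A -> A).
Hypothesis fadd : forall x y, f (x + y) = f x + f y.
Hypothesis fmul : forall x y, f (x * y) = f x * y + x * f y.

Lemma DmM p q r (M : 'M[A]_(p,q)) (N : 'M_(q,r)) :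
  map_mx f (M *m N) = map_mx f M *m N + M *m map_mx f N.
Proof.
apply/matrixP=> a b; rewrite !mxE (der_sum fadd) -big_split; apply: eq_bigr => k _.
by rewrite fmul !mxE.
Qed.
Lemma DmD p q (M N : 'M[A]_(p,q)) : map_mx f (M + N) = map_mx f M + map_mx f N.
Proof. by apply/matrixP=> a b; rewrite !mxE fadd. Qed.
Lemma DmN p q (M : 'M[A]_(p,q)) : map_mx f (- M) = - map_mx f M.
Proof. by apply/matrixP=> a b; rewrite !mxE (derN fadd). Qed.
Lemma DmB p q (M N : 'M[A]_(p,q)) : map_mx f (M - N) = map_mx f M - map_mx f N.
Proof. by rewrite DmD DmN. Qed.
Lemma Dm1 p : map_mx f (1%:M : 'M[A]_p) = 0.
Proof. by apply/matrixP=> a b; rewrite !mxE; case: (a == b); rewrite /= ?(der1 fadd fmul) ?(der0 fadd). Qed.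
End Dm.


Lemma zmodA (V : zmodType) (a b c d e : V) :
  -(a + b) - c + (a + d) + e = (d + e) - (b + c).
Proof.
rewrite !opprD -!addrA.
rewrite [in LHS](addrCA (-c)) [in LHS](addrCA (-b)) addKr.
by rewrite [RHS]addrA [RHS]addrC -addrA.
Qed.

Lemma zmodD (V : zmodType) (a b c d f g : V) :
  a - (b + c) - (d - f) - (a - (d + c) - (b - g)) = f - g.
Proof.
have H : forall x y z : V, x - (y - z) = (x - y) + z.
  by move=> x y z; rewrite opprB addrCA addrC.
rewrite [a - _ - (d - f)]H [a - _ - (b - g)]H.
have -> : a - (d + c) - b = a - (b + c) - d.
  by rewrite -!addrA -!opprD [d + c]addrC [b + c]addrC [c + d + b]addrAC.
by rewrite (addrC _ f) addrKA.
Qed.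

Lemma zmodE (V : zmodType) (a b c d f g : V) :
  a - (c + b) - (d - f) - (a - (c + d) - (b - g)) = f - g.
Proof. by rewrite (addrC c b) (addrC c d) zmodD. Qed.

Section Core.
Variables (A : unitRingType) (n m : nat).
Variables (fi fj : A -> A).
Hypothesis fiadd : forall x y, fi (x + y) = fi x + fi y.
Hypothesis fimul : forall x y, fi (x * y) = fi x * y + x * fi y.
Hypothesis fjadd : forall x y, fj (x + y) = fj x + fj y.
Hypothesis fjmul : forall x y, fj (x * y) = fj x * y + x * fj y.
Hypothesis fcomm : forall x, fi (fj x) = fj (fi x).

Lemma Dcomm p q (M : 'M[A]_(p,q)) : map_mx fi (map_mx fj M) = map_mx fj (map_mx fi M).
Proof. by apply/matrixP=> a b; rewrite !mxE fcomm. Qed.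

Lemma nab3 (z : 'rV[A]_m) (e : 'M[A]_m) :
  (map_mx fi (map_mx fj z - z *m map_mx fj e) - (map_mx fj z - z *m map_mx fj e) *m map_mx fi e)
  - (map_mx fj (map_mx fi z - z *m map_mx fi e) - (map_mx fi z - z *m map_mx fi e) *m map_mx fj e)
  = z *m (- (map_mx fi e *m map_mx fj e - map_mx fj e *m map_mx fi e)).
Proof.
rewrite !(DmB fiadd) !(DmB fjadd) (DmM fiadd fimul) (DmM fjadd fjmul) !mulmxBl ?mulmxA.
rewrite (Dcomm z) (Dcomm e) zmodD.
by rewrite opprB mulmxBr !mulmxA.
Qed.

Lemma nab4 (x : 'cV[A]_m) (e : 'M[A]_m) :
  (map_mx fi (map_mx fj x - map_mx fj e *m x) - map_mx fi e *m (map_mx fj x - map_mx fj e *m x))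
  - (map_mx fj (map_mx fi x - map_mx fi e *m x) - map_mx fj e *m (map_mx fi x - map_mx fi e *m x))
  = - ((- (map_mx fi e *m map_mx fj e - map_mx fj e *m map_mx fi e)) *m x).
Proof.
rewrite !(DmB fiadd) !(DmB fjadd) (DmM fiadd fimul) (DmM fjadd fjmul) !mulmxBr ?mulmxA.
rewrite (Dcomm x) (Dcomm e) zmodE.
by rewrite mulNmx opprK mulmxBl.
Qed.

Section One.
Variables (E : 'M[A]_(n,m)) (T : 'M[A]_(m,n)).
Hypothesis hET : E *m T = 1%:M.
Variable e : 'M[A]_m.
Hypothesis he : T *m E = e.

Lemma ee : e *m e = e.
Proof. by rewrite -he mulmxA -(mulmxA T) hET mulmx1. Qed.
Lemma Ee : E *m e = E.
Proof. by rewrite -he mulmxA hET mul1mx. Qed.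
Lemma eT : e *m T = T.
Proof. by rewrite -he -mulmxA hET mulmx1. Qed.

Lemma Dee (f : A -> A) (fadd : forall x y, f (x + y) = f x + f y)
  (fmul : forall x y, f (x * y) = f x * y + x * f y) :
  map_mx f e = map_mx f e *m e + e *m map_mx f e.
Proof. by rewrite -(DmM fadd fmul) ee. Qed.

Lemma eDe (f : A -> A) (fadd : forall x y, f (x + y) = f x + f y)
  (fmul : forall x y, f (x * y) = f x * y + x * f y) :
  e *m map_mx f e *m e = 0.
Proof.
have H := Dee fadd fmul.
have : e *m map_mx f e *m e = e *m map_mx f e *m e + e *m map_mx f e *m e.
  by rewrite [in LHS]H mulmxDr mulmxDl !mulmxA ee -!mulmxA ee !mulmxA.
by move=> H2; apply: (addrI (e *m map_mx f e *m e)); rewrite addr0 -H2.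
Qed.

Lemma DE (f : A -> A) (fadd : forall x y, f (x + y) = f x + f y)
  (fmul : forall x y, f (x * y) = f x * y + x * f y) :
  map_mx f E = map_mx f E *m e + E *m map_mx f e.
Proof. by rewrite -(DmM fadd fmul) Ee. Qed.

Lemma DeT (f : A -> A) (fadd : forall x y, f (x + y) = f x + f y)
  (fmul : forall x y, f (x * y) = f x * y + x * f y) :
  map_mx f e *m T = map_mx f T + T *m map_mx f E *m T.
Proof. by rewrite -he (DmM fadd fmul) mulmxDl -!mulmxA hET mulmx1. Qed.

Lemma Re (f g : A -> A) (fa : forall x y, f (x + y) = f x + f y)
  (fm : forall x y, f (x * y) = f x * y + x * f y)
  (ga : forall x y, g (x + y) = g x + g y)
  (gm : forall x y, g (x * y) = g x * y + x * g y) :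
  map_mx f e *m map_mx g e *m e = e *m map_mx f e *m map_mx g e.
Proof.
have h1 : forall h : A -> A, (forall x y, h (x + y) = h x + h y) ->
  (forall x y, h (x * y) = h x * y + x * h y) ->
  map_mx h e *m e = map_mx h e - e *m map_mx h e.
  by move=> h ha hm; rewrite {2}(Dee ha hm) addrK.
rewrite -mulmxA (h1 g) // mulmxBr mulmxA (h1 f) // mulmxBl.
by rewrite opprB addrCA subrr addr0.
Qed.

Lemma main1 :
  E *m (- (map_mx fi e *m map_mx fj e - map_mx fj e *m map_mx fi e)) *m T =
  - map_mx fj (map_mx fi E *m T) - (map_mx fi E *m T) *m (map_mx fj E *m T)
  + map_mx fi (map_mx fj E *m T) + (map_mx fj E *m T) *m (map_mx fi E *m T).
Proof.
rewrite (DmM fjadd fjmul) (DmM fiadd fimul) Dcomm.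
rewrite !mulmxA zmodA.
have stepA : forall (f g : A -> A), (forall x y, f (x + y) = f x + f y) ->
  (forall x y, f (x * y) = f x * y + x * f y) ->
  (forall x y, g (x + y) = g x + g y) ->
  (forall x y, g (x * y) = g x * g y + x * g y -> True) ->
  map_mx g E *m map_mx f T + map_mx g E *m T *m map_mx f E *m T
  = map_mx g E *m (map_mx f e *m T).
  move=> f g fa fm _ _; by rewrite (DeT fa fm) mulmxDr !mulmxA.
rewrite (stepA fi fj) // (stepA fj fi) //.
have stepB : forall (f g : A -> A), (forall x y, f (x + y) = f x + f y) ->
  (forall x y, f (x * y) = f x * y + x * f y) ->
  (forall x y, g (x + y) = g x + g y) ->
  (forall x y, g (x * y) = g x * y + x * g y) ->
  map_mx f E *m (map_mx g e *m T) = E *m map_mx f e *m map_mx g e *m T.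
  move=> f g fa fm ga gm.
  have h0 : e *m (map_mx g e *m T) = 0 by rewrite -eT !mulmxA (eDe ga gm) !mul0mx.
  by rewrite [in LHS](DE fa fm) mulmxDl -mulmxA h0 mulmx0 add0r !mulmxA.
rewrite (stepB fi fj) // (stepB fj fi) //.
by rewrite opprB mulmxBr mulmxBl !mulmxA.
Qed.
End One.

Lemma zmodB (V : zmodType) (a b c d e : V) :
  -(b + a) - c + (d + a) + e = (d + e) - (b + c).
Proof. by rewrite (addrC b) (addrC d) zmodA. Qed.

Section Two.
Variables (S : 'M[A]_(n,m)) (U : 'M[A]_(m,n)).
Hypothesis hSU : S *m U = 1%:M.
Variable e : 'M[A]_m.
Hypothesis he : U *m S = e.

Lemma SDe (f : A -> A) (fadd : forall x y, f (x + y) = f x + f y)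
  (fmul : forall x y, f (x * y) = f x * y + x * f y) :
  S *m map_mx f e = map_mx f S + S *m map_mx f U *m S.
Proof. by rewrite -he (DmM fadd fmul) mulmxDr !mulmxA hSU mul1mx addrC. Qed.

Lemma DU (f : A -> A) (fadd : forall x y, f (x + y) = f x + f y)
  (fmul : forall x y, f (x * y) = f x * y + x * f y) :
  map_mx f U = map_mx f e *m U + e *m map_mx f U.
Proof. by rewrite -(DmM fadd fmul) (eT hSU he). Qed.

Lemma main2 :
  - (S *m (- (map_mx fi e *m map_mx fj e - map_mx fj e *m map_mx fi e)) *m U) =
  - map_mx fj (S *m map_mx fi U) - (S *m map_mx fj U) *m (S *m map_mx fi U)
  + map_mx fi (S *m map_mx fj U) + (S *m map_mx fi U) *m (S *m map_mx fj U).
Proof.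
rewrite (DmM fjadd fjmul) (DmM fiadd fimul) Dcomm.
rewrite !mulmxA zmodB.
have stepA : forall (f g : A -> A), (forall x y, f (x + y) = f x + f y) ->
  (forall x y, f (x * y) = f x * y + x * f y) ->
  map_mx f S *m map_mx g U + S *m map_mx f U *m S *m map_mx g U
  = S *m map_mx f e *m map_mx g U.
  move=> f g fa fm; by rewrite (SDe fa fm) mulmxDl.
rewrite (stepA fi fj) // (stepA fj fi) //.
have stepB : forall (f g : A -> A), (forall x y, f (x + y) = f x + f y) ->
  (forall x y, f (x * y) = f x * y + x * f y) ->
  (forall x y, g (x + y) = g x + g y) ->
  (forall x y, g (x * y) = g x * y + x * g y) ->
  S *m map_mx f e *m map_mx g U = S *m map_mx f e *m map_mx g e *m U.
  move=> f g fa fm ga gm.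
  have h0 : S *m map_mx f e *m e = 0.
    by rewrite -(Ee hSU he) -!mulmxA (mulmxA e) (eDe hSU he fa fm) mulmx0.
  by rewrite [in LHS](DU ga gm) mulmxDr !mulmxA h0 mul0mx addr0.
rewrite (stepB fi fj) // (stepB fj fi) //.
by rewrite opprB mulmxBr mulmxBl !mulmxA opprB.
Qed.
End Two.
End Core.


Section Glue.
Variables (A : unitRingType) (n m : nat) (d : 'I_n -> A -> A) (X : 'rV[A]_m) (ginv : 'M[A]_n).

Definition Emat : 'M[A]_(n,m) := \matrix_(k, a) d k (X 0 a).
Definition Tm : 'M[A]_(m,n) := Emat^T *m ginv.

Lemma F1 k : Evec d X k = row k Emat.
Proof. by apply/matrixP=> i a; rewrite !mxE (ord1 i). Qed.

Lemma F2 : gmet d X = Emat *m Emat^T.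
Proof.
apply/matrixP=> i j; rewrite !mxE; apply: eq_bigr => a _.
by rewrite /Evec /dmx !mxE.
Qed.

Lemma F3 l : Etil d X ginv l = col l Tm.
Proof.
apply/matrixP=> a i; rewrite (ord1 i) summxE !mxE; apply: eq_bigr => j _.
by rewrite /rsc /Evec /dmx !mxE.
Qed.

Lemma F4 : eproj d X ginv = Tm *m Emat.
Proof.
apply/matrixP=> a b; rewrite summxE !mxE; apply: eq_bigr => j _.
by rewrite !mxE big_ord1 F3 F1 !mxE.
Qed.

Lemma ent_rc p q r (M : 'M[A]_(p,q)) (R : 'M[A]_(q,q)) (N : 'M[A]_(q,r)) k l :
  (row k M *m R *m col l N) 0 0 = (M *m R *m N) k l.
Proof. by rewrite -row_mul; rewrite !mxE; apply: eq_bigr => a _; rewrite !mxE. Qed.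

Lemma F10 (R : 'M[A]_m) k l : (Evec d X k *m R *m Etil d X ginv l) 0 0 = (Emat *m R *m Tm) k l.
Proof. by rewrite F1 F3 ent_rc. Qed.

End Glue.


Section Glue2.
Variables (A : unitRingType) (n m : nat) (d : 'I_n -> A -> A) (X : 'rV[A]_m) (ginv : 'M[A]_n).
Hypothesis h2 : (2%:R : A) \is a GRing.unit.
Hypothesis d_add : forall i x y, d i (x + y) = d i x + d i y.
Hypothesis d_mul : forall i x y, d i (x * y) = d i x * y + x * d i y.
Hypothesis d_comm : forall i j x, d i (d j x) = d j (d i x).

Lemma gE j l : gmet d X j l = \sum_a d j (X 0 a) * d l (X 0 a).
Proof. by rewrite /gmet /Evec /dmx !mxE; apply: eq_bigr => a _; rewrite !mxE. Qed.

Lemma dgE i j l : d i (gmet d X j l) =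
  \sum_a d i (d j (X 0 a)) * d l (X 0 a) + \sum_a d j (X 0 a) * d i (d l (X 0 a)).
Proof. by rewrite gE (der_sum (d_add i)) -big_split; apply: eq_bigr => a _; rewrite d_mul. Qed.

Lemma zmodF (V : zmodType) (P Q Z W : V) : P + W + (Z + Q) - (Z + W) = P + Q.
Proof. by rewrite (addrC Z Q) addrACA (addrC Z W) addrK. Qed.

Lemma Gam3E i j l : Gam3 d X i j l = \sum_a d i (d j (X 0 a)) * d l (X 0 a).
Proof.
rewrite /Gam3 /cGam /Ups !dgE.
have -> : \sum_a d j (d l (X 0 a)) * d i (X 0 a) = \sum_a d l (d j (X 0 a)) * d i (X 0 a).
  by apply: eq_bigr => a _; rewrite d_comm.
have -> : \sum_a d l (X 0 a) * d j (d i (X 0 a)) = \sum_a d l (X 0 a) * d i (d j (X 0 a)).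
  by apply: eq_bigr => a _; rewrite d_comm.
have -> : \sum_a d j (X 0 a) * d l (d i (X 0 a)) = \sum_a d j (X 0 a) * d i (d l (X 0 a)).
  by apply: eq_bigr => a _; rewrite d_comm.
rewrite zmodF.
have -> : (dmx d i (Evec d X j) *m (Evec d X l)^T) 0 0 = \sum_a d i (d j (X 0 a)) * d l (X 0 a).
  by rewrite /Evec /dmx !mxE; apply: eq_bigr => a _; rewrite !mxE.
have -> : (Evec d X l *m (dmx d i (Evec d X j))^T) 0 0 = \sum_a d l (X 0 a) * d i (d j (X 0 a)).
  by rewrite /Evec /dmx !mxE; apply: eq_bigr => a _; rewrite !mxE.
rewrite -mulrDr addrACA subrr addr0 -mulr2n -mulr_natl mulrA /half mulVr // mul1r.
done.
Qed.
Lemma Gamt3E i j l : Gamt3 d X i j l = \sum_a d l (X 0 a) * d i (d j (X 0 a)).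
Proof.
rewrite /Gamt3 /cGam /Ups !dgE.
have -> : \sum_a d j (d l (X 0 a)) * d i (X 0 a) = \sum_a d l (d j (X 0 a)) * d i (X 0 a).
  by apply: eq_bigr => a _; rewrite d_comm.
have -> : \sum_a d l (X 0 a) * d j (d i (X 0 a)) = \sum_a d l (X 0 a) * d i (d j (X 0 a)).
  by apply: eq_bigr => a _; rewrite d_comm.
have -> : \sum_a d j (X 0 a) * d l (d i (X 0 a)) = \sum_a d j (X 0 a) * d i (d l (X 0 a)).
  by apply: eq_bigr => a _; rewrite d_comm.
rewrite zmodF.
have -> : (dmx d i (Evec d X j) *m (Evec d X l)^T) 0 0 = \sum_a d i (d j (X 0 a)) * d l (X 0 a).
  by rewrite /Evec /dmx !mxE; apply: eq_bigr => a _; rewrite !mxE.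
have -> : (Evec d X l *m (dmx d i (Evec d X j))^T) 0 0 = \sum_a d l (X 0 a) * d i (d j (X 0 a)).
  by rewrite /Evec /dmx !mxE; apply: eq_bigr => a _; rewrite !mxE.
rewrite -mulrBr opprB (addrC (\sum_a _ * _)) addrACA subrr addr0.
by rewrite -mulr2n -mulr_natl mulrA /half mulVr // mul1r.
Qed.

Lemma GamE i k l : Gam d X ginv i k l = (map_mx (d i) (Emat d X) *m Tm d X ginv) k l.
Proof.
rewrite /Gam /Tm mulmxA mxE; apply: eq_bigr => q _; rewrite Gam3E mxE; congr (_ * _).
by apply: eq_bigr => a _; rewrite !mxE.
Qed.

Lemma GamtE i k l : Gamt d X ginv i k l =
  (ginv *m Emat d X *m map_mx (d i) (Emat d X)^T) l k.
Proof.
rewrite /Gamt -mulmxA mxE; apply: eq_bigr => q _; rewrite Gamt3E mxE; congr (_ * _).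
by apply: eq_bigr => a _; rewrite !mxE.
Qed.
End Glue2.


Lemma entD (A : unitRingType) (f : A -> A) p q (M : 'M[A]_(p,q)) a b : f (M a b) = (map_mx f M) a b.
Proof. by rewrite mxE. Qed.
Lemma entM (A : unitRingType) p q r (M : 'M[A]_(p,q)) (N : 'M[A]_(q,r)) a b :
  \sum_j M a j * N j b = (M *m N) a b.
Proof. by rewrite mxE. Qed.
Lemma ent4 (A : unitRingType) p q (M1 M2 M3 M4 : 'M[A]_(p,q)) a b :
  - M1 a b - M2 a b + M3 a b + M4 a b = (- M1 - M2 + M3 + M4) a b.
Proof. by rewrite !mxE. Qed.
Lemma lsc_sum (A : unitRingType) n m (M : 'M[A]_n) (N : 'M[A]_(n,m)) k :
  \sum_l lsc (M k l) (row l N) = row k (M *m N).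
Proof.
apply/matrixP=> i b; rewrite summxE !mxE; apply: eq_bigr => l _; by rewrite !mxE.
Qed.
Lemma rsc_sum (A : unitRingType) n m (P : 'M[A]_(m,n)) (Q : 'M[A]_n) k :
  \sum_l rsc (col l P) (Q l k) = col k (P *m Q).
Proof.
apply/matrixP=> i b; rewrite summxE !mxE; apply: eq_bigr => l _; by rewrite !mxE.
Qed.
Lemma col_mulmx (A : unitRingType) p q r (M : 'M[A]_(p,q)) (N : 'M[A]_(q,r)) k :
  col k (M *m N) = M *m col k N.
Proof. apply/matrixP=> i b; rewrite !mxE; apply: eq_bigr => l _; by rewrite !mxE. Qed.
Lemma colN (A : unitRingType) p q (M : 'M[A]_(p,q)) k : col k (- M) = - col k M.
Proof. by apply/matrixP=> i b; rewrite !mxE. Qed.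
Lemma sum2 (A : unitRingType) n (G M H : 'M[A]_n) l k :
  \sum_q \sum_p G l q * M q p * H p k = (G *m M *m H) l k.
Proof.
rewrite mxE (exchange_big) /=; apply: eq_bigr => p _.
by rewrite mxE mulr_suml.
Qed.

Unset Implicit Arguments.
Theorem mainTheorem13 (A : unitRingType) (n m : nat)
  (d : 'I_n -> A -> A) (X : 'rV[A]_m) (ginv : 'M[A]_n)
  (h2 : (2%:R : A) \is a GRing.unit)
  (d_add : forall i x y, d i (x + y) = d i x + d i y)
  (d_mul : forall i x y, d i (x * y) = d i x * y + x * d i y)
  (d_comm : forall i j x, d i (d j x) = d j (d i x))
  (hginvR : gmet d X *m ginv = 1%:M)
  (hginvL : ginv *m gmet d X = 1%:M) :
  (forall l k i j,
     Rcomp d X ginv l k i j =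
       - d j (Gam d X ginv i k l) - (\sum_p Gam d X ginv i k p * Gam d X ginv j p l)
       + d i (Gam d X ginv j k l) + (\sum_p Gam d X ginv j k p * Gam d X ginv i p l)) /\
  (forall l k i j,
     Rtcomp d X ginv l k i j =
       - d j (Gamt d X ginv i k l) - (\sum_p Gamt d X ginv j p l * Gamt d X ginv i k p)
       + d i (Gamt d X ginv j k l) + (\sum_p Gamt d X ginv i p l * Gamt d X ginv j k p)) /\
  (forall k i j,
     nabla d X ginv i (nabla d X ginv j (Evec d X k))
       - nabla d X ginv j (nabla d X ginv i (Evec d X k))
     = \sum_l lsc (Rcomp d X ginv l k i j) (Evec d X l)) /\
  (forall k i j,
     nablat d X ginv i (nablat d X ginv j (Evec d X k)^T)
       - nablat d X ginv j (nablat d X ginv i (Evec d X k)^T)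
     = \sum_l rsc (Evec d X l)^T (Rtcomp d X ginv l k i j)).
Proof.
have GE := GamE X ginv h2 d_add d_mul d_comm.
have GtE := GamtE X ginv h2 d_add d_mul d_comm.
have hET : (Emat d X) *m (Tm d X ginv) = 1%:M by rewrite /Tm mulmxA -F2.
have he : (Tm d X ginv) *m (Emat d X) = (eproj d X ginv) by rewrite F4.
have hSU : (ginv *m (Emat d X)) *m (Emat d X)^T = 1%:M by rewrite -mulmxA -F2.
have hUS : (Emat d X)^T *m (ginv *m (Emat d X)) = (eproj d X ginv) by rewrite mulmxA -he.
have Rc_e : forall i j, Rcurv d X ginv i j *m (eproj d X ginv) = (eproj d X ginv) *m Rcurv d X ginv i j.
  move=> i j; rewrite /Rcurv /dmx mulNmx mulmxN mulmxBl mulmxBr.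
  by rewrite !(Re hET he) // !mulmxA.
have Rtc : forall l k i j, Rtcomp d X ginv l k i j =
    (- ((ginv *m (Emat d X)) *m Rcurv d X ginv i j *m (Emat d X)^T)) l k.
  move=> l k i j; rewrite /Rtcomp.
  have -> : \sum_q \sum_p ginv l q * (Evec d X q *m Rcurv d X ginv i j *m Etil d X ginv p) 0 0 * gmet d X p k
     = \sum_q \sum_p ginv l q * ((Emat d X) *m Rcurv d X ginv i j *m (Tm d X ginv)) q p * gmet d X p k.
    by apply: eq_bigr => q _; apply: eq_bigr => p _; rewrite F10.
  rewrite sum2.
  have -> : ginv *m ((Emat d X) *m Rcurv d X ginv i j *m (Tm d X ginv)) *m gmet d X = ginv *m (Emat d X) *m Rcurv d X ginv i j *m (Emat d X)^T.
    by rewrite /Tm -!mulmxA hginvL mulmx1.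
  by rewrite [RHS]mxE.
split; [|split; [|split]].
- move=> l k i j.
  under eq_bigr => p _ do rewrite !GE.
  under [X in _ + X]eq_bigr => p _ do rewrite !GE.
  rewrite /Rcomp F10 !GE (entD (d j)) (entD (d i)) !entM ent4.
  rewrite -(main1 (d_add i) (d_mul i) (d_add j) (d_mul j) (d_comm i j) hET he).
  by rewrite /Rcurv /dmx.
- move=> l k i j.
  under eq_bigr => p _ do rewrite !GtE.
  under [X in _ + X]eq_bigr => p _ do rewrite !GtE.
  rewrite Rtc !GtE (entD (d j)) (entD (d i)) !entM ent4.
  rewrite -(main2 (d_add i) (d_mul i) (d_add j) (d_mul j) (d_comm i j) hSU hUS).
  by rewrite /Rcurv /dmx.
- move=> k i j.
  rewrite /nabla /dmx (nab3 (d_add i) (d_mul i) (d_add j) (d_mul j) (d_comm i j)).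
  have -> : \sum_l lsc (Rcomp d X ginv l k i j) (Evec d X l)
      = row k ((Emat d X) *m Rcurv d X ginv i j *m (Tm d X ginv) *m (Emat d X)).
    rewrite -lsc_sum; apply: eq_bigr => l _; by rewrite /Rcomp F10 F1.
  rewrite !row_mul -F1 -mulmxA he -mulmxA Rc_e mulmxA !F1 -(row_mul k (Emat d X) (eproj d X ginv)) (Ee hET he).
  by rewrite /Rcurv /dmx.
- move=> k i j.
  rewrite /nablat /dmx (nab4 (d_add i) (d_mul i) (d_add j) (d_mul j) (d_comm i j)).
  have -> : \sum_l rsc (Evec d X l)^T (Rtcomp d X ginv l k i j)
      = col k ((Emat d X)^T *m - ((ginv *m (Emat d X)) *m Rcurv d X ginv i j *m (Emat d X)^T)).
    rewrite -rsc_sum; apply: eq_bigr => l _; by rewrite Rtc F1 tr_row.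
  rewrite mulmxN !mulmxA (_ : (Emat d X)^T *m ginv *m Emat d X = eproj d X ginv); last by rewrite -mulmxA hUS.
  rewrite -Rc_e -mulmxA (eT hSU hUS) colN col_mulmx.
  by rewrite F1 tr_row /Rcurv /dmx.
Qed.
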